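(* Restriction of rational functions induces an isomorphism $\mathbb C(\mathscr X_2)^G\cong\mathbb C(\mathcal S)^N$.
   Context: Identify $V_1=V_2=\mathbb C^2$ with Pauli matrices $\sigma_1=\begin{pmatrix}0&1\\1&0\end{pmatrix}$, $\sigma_2=\begin{pmatrix}0&-i\\i&0\end{pmatrix}$, $\sigma_3=\begin{pmatrix}1&0\\0&-1\end{pmatrix}$. Trace-one endomorphisms of $\mathbb C^2\otimes\mathbb C^2$ are written uniquely as $\tfrac14\big(I\otimes I+\sum_a v_a\sigma_a\otimes I+\sum_b w_bI\otimes\sigma_b+\sum_{a,b}C_{ba}\sigma_a\otimes\sigma_b\big)$, giving coordinates $(v,w,C)\in\mathbb C^3\times\mathbb C^3\times M_3(\mathbb C)$ on the space $\mathscr L_2$; $G=\mathrm{SO}_3(\mathbb C)^2$ acts by $(g_1,g_2)\cdot(v,w,C)=(g_1v,g_2w,g_2Cg_1^{-1})$. Let $X_0$ be the subspace with $v_1=v_2=w_1=w_2=0$ and $C_{ba}=0$ whenever exactly one of $a,b$ equals $3$; $\mathscr X_2$ is the Zariski closure of $G\cdot X_0$ (equivalently of the set of two-qubit X-states), with reduced structure. $\mathcal S\subseteq\mathscr X_2$ is the image of $(x,y,\lambda)\in\mathbb C\times\mathbb C\times\mathbb C^3\mapsto((0,0,x),(0,0,y),\operatorname{diag}(\lambda_1,\lambda_2,\lambda_3))$. $N\subseteq G$ is the group of order $32$ of pairs $(g_1,g_2)$ with $g_k=\begin{pmatrix}A_k&0\\0&\det A_k\end{pmatrix}$, where $A_1,A_2$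 are $2\times 2$ signed permutation matrices (entries in $\{0,\pm1\}$) having the same underlying permutation; $N$ preserves $\mathcal S$. *)

(* Defs.v *)
From HB Require Import structures.
From mathcomp Require Import all_boot all_order all_algebra all_fingroup.
From mathcomp Require Import mpoly.
From mathcomp Require Import reals.
From mathcomp Require Import complex.

Set Implicit Arguments.
Unset Strict Implicit.
Unset Printing Implicit Defensive.
Import Order.TTheory GRing.Theory Num.Theory.
Local Open Scope ring_scope.

Section XStates.
Variable K : fieldType.

(* A point (v, w, C) of the space L_2 of trace-one endomorphisms of C^2 (x) C^2,
   in the Pauli coordinates of the paper; C b a = C_{ba}, indices 0,1,2 <-> 1,2,3. *)
Definition pt := ('cV[K]_3 * 'cV[K]_3 * 'M[K]_3)%type.

Definition coords (z : pt) : 'I_15 -> K :=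
  fun i => let: (v, w, C) := z in
    if (i < 3)%N then v (inord i) 0
    else if (i < 6)%N then w (inord (i - 3)) 0
    else C (inord ((i - 6) %/ 3)) (inord ((i - 6) %% 3)).

Definition polyL := {mpoly K[15]}.
Definition ev (p : polyL) (z : pt) : K := p.@[coords z].

Definition SO3 (g : 'M[K]_3) : Prop := g^T *m g = 1%:M /\ \det g = 1.

Definition act (g1 g2 : 'M[K]_3) (z : pt) : pt :=
  let: (v, w, C) := z in (g1 *m v, g2 *m w, g2 *m C *m invmx g1).

Definition inG (g1 g2 : 'M[K]_3) : Prop := SO3 g1 /\ SO3 g2.

Definition X0 (z : pt) : Prop :=
  let: (v, w, C) := z in
  [/\ v 0 0 = 0, v 1 0 = 0, w 0 0 = 0, w 1 0 = 0 &
      forall b a : 'I_3, (b == 2 :> 'I_3) != (a == 2 :> 'I_3) -> C b a = 0].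

Definition GX0 (z : pt) : Prop := exists g1 g2 x, [/\ inG g1 g2, X0 x & z = act g1 g2 x].

Definition vanish_on (Y : pt -> Prop) (f : pt -> K) : Prop := forall z, Y z -> f z = 0.

Definition zclosure (Y : pt -> Prop) (z : pt) : Prop :=
  forall p : polyL, vanish_on Y (ev p) -> ev p z = 0.

(* script X_2, with its reduced structure (ideal = all polynomials vanishing on it) *)
Definition X2 : pt -> Prop := zclosure GX0.

Definition Ssub (z : pt) : Prop :=
  exists (x y : K) (l : 'rV[K]_3),
    z = (\col_i (if i == 2 :> 'I_3 then x else 0),
         \col_i (if i == 2 :> 'I_3 then y else 0),
         diag_mx l).

Definition signed_perm (s : 'S_2) (A : 'M[K]_2) : Prop :=
  forall i j : 'I_2, if j == s i then (A i j = 1 \/ A i j = -1) else A i j = 0.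

Definition embed2 (A : 'M[K]_2) : 'M[K]_3 := block_mx A 0 0 (\det A)%:M.

Definition inN (g1 g2 : 'M[K]_3) : Prop :=
  exists (s : 'S_2) (A1 A2 : 'M[K]_2),
    [/\ signed_perm s A1, signed_perm s A2, g1 = embed2 A1 & g2 = embed2 A2].

(* Rational functions on an irreducible subvariety Y of L_2 are represented by
   fractions p/q of polynomials with q not vanishing identically on Y;
   p/q and p'/q' are the same rational function on Y iff p q' - p' q vanishes on Y. *)
Definition ratfun_on (Y : pt -> Prop) (p q : polyL) : Prop := ~ vanish_on Y (ev q).

Definition same_on (Y : pt -> Prop) (p q p' q' : polyL) : Prop :=
  vanish_on Y (fun z => ev p z * ev q' z - ev p' z * ev q z).

(* invariance of the rational function p/q on Y under a set H of linear maps
   preserving Y: (p/q) o h = p/q as rational functions on Y, for every h in H *)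
Definition invariant_on (Y : pt -> Prop) (H : 'M[K]_3 -> 'M[K]_3 -> Prop)
  (p q : polyL) : Prop :=
  forall g1 g2, H g1 g2 ->
    vanish_on Y (fun z => ev p (act g1 g2 z) * ev q z - ev p z * ev q (act g1 g2 z)).

End XStates.

(* Main.v *)
Require Import Defs.
From HB Require Import structures.
From mathcomp Require Import all_boot all_order all_algebra all_fingroup.
From mathcomp Require Import mpoly.
From mathcomp Require Import reals.
From mathcomp Require Import complex.
Import Order.TTheory GRing.Theory Num.Theory.
Local Open Scope ring_scope.

From mathcomp Require Import ring zify.
From Stdlib Require Import Classical.
Require Import Defs.

Set Implicit Arguments.
Unset Strict Implicit.
Unset Printing Implicit Defensive.


Section Closure.
Variables (K : comRingType) (D : Type) (Cl : (D -> K) -> Prop).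
Hypotheses (clE : forall f g, Cl f -> (forall x, f x = g x) -> Cl g)
  (clC : forall c, Cl (fun _ => c))
  (clD : forall f g, Cl f -> Cl g -> Cl (fun x => f x + g x))
  (clM : forall f g, Cl f -> Cl g -> Cl (fun x => f x * g x)).

Lemma cl_sum (I : Type) (r : seq I) (P : pred I) (F : I -> D -> K) :
  (forall i, P i -> Cl (F i)) -> Cl (fun x => \sum_(i <- r | P i) F i x).
Proof.
move=> H; elim: r => [|a r IH].
  by apply: clE (clC 0) _ => x; rewrite big_nil.
case Pa: (P a).
  by apply: clE (clD (H a Pa) IH) _ => x; rewrite big_cons Pa.
by apply: clE IH _ => x; rewrite big_cons Pa.
Qed.

Lemma cl_prod (I : Type) (r : seq I) (P : pred I) (F : I -> D -> K) :
  (forall i, P i -> Cl (F i)) -> Cl (fun x => \prod_(i <- r | P i) F i x).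
Proof.
move=> H; elim: r => [|a r IH].
  by apply: clE (clC 1) _ => x; rewrite big_nil.
case Pa: (P a).
  by apply: clE (clM (H a Pa) IH) _ => x; rewrite big_cons Pa.
by apply: clE IH _ => x; rewrite big_cons Pa.
Qed.

Lemma cl_exp f n : Cl f -> Cl (fun x => f x ^+ n).
Proof.
move=> H; elim: n => [|n IH]; first by apply: clE (clC 1) _ => x; rewrite expr0.
by apply: clE (clM H IH) _ => x; rewrite exprS.
Qed.

Lemma cl_meval n (P : {mpoly K[n]}) (c : 'I_n -> D -> K) :
  (forall i, Cl (c i)) -> Cl (fun x => P.@[fun i => c i x]).
Proof.
move=> H.
have H1 : Cl (fun x => \sum_(m <- msupp P | xpredT m) P@_m * \prod_(i < n) c i x ^+ m i).
  apply: (@cl_sum _ _ _ (fun (m : 'X_{1..n}) x => P@_m * \prod_(i < n) c i x ^+ m i)).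
  move=> m _; apply: clM; first exact: clC.
  by apply: (@cl_prod _ _ _ (fun (i : 'I_n) x => c i x ^+ m i)) => i _; apply: cl_exp.
by apply: clE H1 _ => x; rewrite mevalE.
Qed.

End Closure.

Section Inf.
Variable K : numClosedFieldType.

Definition PF n (f : ('I_n -> K) -> K) := exists P : {mpoly K[n]}, forall t, P.@[t] = f t.
Definition UP (f : K -> K) := exists U : {poly K}, forall x, U.[x] = f x.

Lemma PF_E n f g : @PF n f -> (forall x, f x = g x) -> PF g.
Proof. by move=> [P HP] H; exists P => t; rewrite HP. Qed.
Lemma PF_C n c : @PF n (fun _ => c).
Proof. by exists c%:MP => t; rewrite mevalC. Qed.
Lemma PF_D n f g : @PF n f -> PF g -> PF (fun x => f x + g x).
Proof. by move=> [P HP] [Q HQ]; exists (P + Q) => t; rewrite mevalD HP HQ. Qed.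
Lemma PF_M n f g : @PF n f -> PF g -> PF (fun x => f x * g x).
Proof. by move=> [P HP] [Q HQ]; exists (P * Q) => t; rewrite mevalM HP HQ. Qed.
Lemma PF_X n i : @PF n (fun t => t i).
Proof. by exists 'X_i => t; rewrite mevalXU. Qed.

Lemma UP_E f g : UP f -> (forall x, f x = g x) -> UP g.
Proof. by move=> [P HP] H; exists P => t; rewrite HP. Qed.
Lemma UP_C c : UP (fun _ => c).
Proof. by exists c%:P => t; rewrite hornerC. Qed.
Lemma UP_D f g : UP f -> UP g -> UP (fun x => f x + g x).
Proof. by move=> [P HP] [Q HQ]; exists (P + Q) => t; rewrite hornerD HP HQ. Qed.
Lemma UP_M f g : UP f -> UP g -> UP (fun x => f x * g x).
Proof. by move=> [P HP] [Q HQ]; exists (P * Q) => t; rewrite hornerM HP HQ. Qed.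
Lemma UP_X : UP id.
Proof. by exists 'X => t; rewrite hornerX. Qed.

Lemma poly_nz_pt (U : {poly K}) : U != 0 -> exists x, U.[x] != 0.
Proof.
move=> U0; apply: NNPP => H.
have H0 : forall x, U.[x] = 0.
  by move=> x; apply/eqP; apply: contraT => Hx; case: H; exists x.
suff: (size [seq i%:R : K | i <- iota 0 (size U)] < size U)%N.
  by rewrite size_map size_iota ltnn.
apply: max_poly_roots U0 _ _.
  by apply/allP => x /mapP [i _ ->]; rewrite /root H0.
rewrite map_inj_uniq ?iota_uniq // => a b /eqP; rewrite eqr_nat => /eqP.
by [].
Qed.

Lemma UP_nz (f : K -> K) x0 : UP f -> f x0 != 0 ->
  forall g x1, UP g -> g x1 != 0 -> exists x, f x * g x != 0.
Proof.
move=> [U HU] Hf g x1 [V HV] Hg.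
have U0 : U != 0 by apply: contraNneq Hf => U0; rewrite -HU U0 horner0.
have V0 : V != 0 by apply: contraNneq Hg => V0; rewrite -HV V0 horner0.
have [x Hx] := poly_nz_pt (mulf_neq0 U0 V0).
by exists x; rewrite -HU -HV -hornerM.
Qed.

Lemma PF_nz n (f g : ('I_n -> K) -> K) t1 t2 :
  PF f -> PF g -> f t1 != 0 -> g t2 != 0 -> exists t, f t * g t != 0.
Proof.
move=> [P HP] [Q HQ] H1 H2.
pose c := fun (i : 'I_n) (x : K) => t1 i + x * (t2 i - t1 i).
have Hc : forall i, UP (c i).
  move=> i; apply: UP_D; first exact: UP_C.
  by apply: UP_M; [exact: UP_X | exact: UP_C].
have UPf := @cl_meval K K UP UP_E UP_C UP_D UP_M n P c Hc.
have UPg := @cl_meval K K UP UP_E UP_C UP_D UP_M n Q c Hc.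
have [||x Hx] := @UP_nz _ 0 UPf _ _ 1 UPg.
- by rewrite (@meval_eq _ _ _ t1) ?HP // => i; rewrite /c mul0r addr0.
- by rewrite (@meval_eq _ _ _ t2) ?HQ // => i; rewrite /c mul1r addrC subrK.
by exists (fun i => c i x); rewrite -HP -HQ.
Qed.

End Inf.


Section Mx3.
Variable K : comRingType.

Definition mx3 (a b c d e f g h k : K) : 'M[K]_3 :=
  \matrix_(i < 3, j < 3) nth 0 (nth [::] [:: [:: a; b; c]; [:: d; e; f]; [:: g; h; k]] i) j.
Definition col3 (a b c : K) : 'cV[K]_3 := \col_(i < 3) nth 0 [:: a; b; c] i.
Definition mx2 (a b c d : K) : 'M[K]_2 :=
  \matrix_(i < 2, j < 2) nth 0 (nth [::] [:: [:: a; b]; [:: c; d]] i) j.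

Lemma ord3_cases (i : 'I_3) : [\/ i = 0, i = 1 | i = 2].
Proof.
case: i => [[|[|[|i]]] Hi].
- by constructor 1; apply: val_inj.
- by constructor 2; apply: val_inj.
- by constructor 3; apply: val_inj.
- by [].
Qed.

Lemma ord2_cases (i : 'I_2) : i = 0 \/ i = 1.
Proof.
case: i => [[|[|i]] Hi].
- by left; apply: val_inj.
- by right; apply: val_inj.
- by [].
Qed.

Lemma mx3E (A : 'M[K]_3) : A = mx3 (A 0 0) (A 0 1) (A 0 2) (A 1 0) (A 1 1) (A 1 2) (A 2 0) (A 2 1) (A 2 2).
Proof.
apply/matrixP => i j; rewrite mxE.
by case: (ord3_cases i) => ->; case: (ord3_cases j) => ->.
Qed.

Lemma col3E (v : 'cV[K]_3) : v = col3 (v 0 0) (v 1 0) (v 2 0).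
Proof.
apply/matrixP => i j; rewrite mxE; rewrite [j]ord1.
by case: (ord3_cases i) => ->.
Qed.

Lemma mx2E (A : 'M[K]_2) : A = mx2 (A 0 0) (A 0 1) (A 1 0) (A 1 1).
Proof.
apply/matrixP => i j; rewrite mxE.
by case: (ord2_cases i) => ->; case: (ord2_cases j) => ->.
Qed.

Lemma sum3 (F : 'I_3 -> K) : \sum_(i < 3) F i = F 0 + F 1 + F 2.
Proof. rewrite !big_ord_recr big_ord0 /= add0r. by congr (_ + _ + _); congr F; apply: val_inj. Qed.
Lemma sum2 (F : 'I_2 -> K) : \sum_(i < 2) F i = F 0 + F 1.
Proof. rewrite !big_ord_recr big_ord0 /= add0r. by congr (_ + _); congr F; apply: val_inj. Qed.

Lemma mulmx3 a b c d e f g h k a' b' c' d' e' f' g' h' k' :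
  mx3 a b c d e f g h k *m mx3 a' b' c' d' e' f' g' h' k' =
  mx3 (a*a' + b*d' + c*g') (a*b' + b*e' + c*h') (a*c' + b*f' + c*k')
      (d*a' + e*d' + f*g') (d*b' + e*e' + f*h') (d*c' + e*f' + f*k')
      (g*a' + h*d' + k*g') (g*b' + h*e' + k*h') (g*c' + h*f' + k*k').
Proof.
apply/matrixP => i j; rewrite !mxE sum3 !mxE.
by case: (ord3_cases i) => ->; case: (ord3_cases j) => ->.
Qed.

Lemma mulmx3c a b c d e f g h k x y z :
  mx3 a b c d e f g h k *m col3 x y z =
  col3 (a*x + b*y + c*z) (d*x + e*y + f*z) (g*x + h*y + k*z).
Proof.
apply/matrixP => i j; rewrite !mxE sum3 !mxE.
by case: (ord3_cases i) => ->.
Qed.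

Lemma trmx3 a b c d e f g h k :
  (mx3 a b c d e f g h k)^T = mx3 a d g b e h c f k.
Proof.
apply/matrixP => i j; rewrite !mxE.
by case: (ord3_cases i) => ->; case: (ord3_cases j) => ->.
Qed.

Lemma mulmx2 a b c d a' b' c' d' :
  mx2 a b c d *m mx2 a' b' c' d' =
  mx2 (a*a' + b*c') (a*b' + b*d') (c*a' + d*c') (c*b' + d*d').
Proof.
apply/matrixP => i j; rewrite !mxE sum2 !mxE.
by case: (ord2_cases i) => ->; case: (ord2_cases j) => ->.
Qed.

Lemma trmx2 a b c d : (mx2 a b c d)^T = mx2 a c b d.
Proof.
apply/matrixP => i j; rewrite !mxE.
by case: (ord2_cases i) => ->; case: (ord2_cases j) => ->.
Qed.

Lemma det_mx2 a b c d : \det (mx2 a b c d) = a * d - b * c.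
Proof.
rewrite (expand_det_row _ 0) sum2 /cofactor !mxE /=.
rewrite !(expand_det_row _ 0) !big_ord1 /cofactor !mxE /= !det_mx00.
have -> : (0 + 1 %% 2 = 1)%N by [].
by rewrite expr0 expr1; ring.
Qed.

Lemma id3 : (1%:M : 'M[K]_3) = mx3 1 0 0 0 1 0 0 0 1.
Proof.
apply/matrixP => i j; rewrite !mxE.
by case: (ord3_cases i) => ->; case: (ord3_cases j) => ->.
Qed.

End Mx3.


Section Pts.
Variable K : numClosedFieldType.
Local Notation pt := (pt K).

Definition iv (k : 'I_3) : 'I_15 := inord k.
Definition iw (k : 'I_3) : 'I_15 := inord (3 + k).
Definition iC (b a : 'I_3) : 'I_15 := inord (6 + 3 * b + a).

Lemma coords_iv (z : pt) k : coords z (iv k) = z.1.1 k 0.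
Proof.
case: z => [[v w] C] /=; rewrite /iv inordK; last by apply: (leq_trans (ltn_ord k)).
by rewrite ltn_ord inord_val.
Qed.

Lemma coords_iw (z : pt) k : coords z (iw k) = z.1.2 k 0.
Proof.
case: z => [[v w] C] /=; rewrite /iw inordK; last by have := ltn_ord k; lia.
have -> : (3 + k < 3)%N = false by lia.
have -> : (3 + k < 6)%N by have := ltn_ord k; lia.
by rewrite addKn inord_val.
Qed.

Lemma coords_iC (z : pt) b a : coords z (iC b a) = z.2 b a.
Proof.
case: z => [[v w] C] /=; rewrite /iC inordK; last by have := ltn_ord a; have := ltn_ord b; lia.
have -> : (6 + 3 * b + a < 3)%N = false by lia.
have -> : (6 + 3 * b + a < 6)%N = false by lia.
have -> : (6 + 3 * b + a - 6 = b * 3 + a)%N by lia.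
rewrite divnMDl // modnMDl divn_small ?modn_small // addn0.
by rewrite !inord_val.
Qed.

End Pts.

Section ClPt.
Variables (K : numClosedFieldType) (D : Type) (Cl : (D -> K) -> Prop).
Hypotheses (clE : forall f g, Cl f -> (forall x, f x = g x) -> Cl g)
  (clC : forall c, Cl (fun _ => c))
  (clD : forall f g, Cl f -> Cl g -> Cl (fun x => f x + g x))
  (clM : forall f g, Cl f -> Cl g -> Cl (fun x => f x * g x)).

Definition Clmx m n (M : D -> 'M[K]_(m, n)) := forall i j, Cl (fun x => M x i j).

Lemma clmx_C m n (A : 'M[K]_(m, n)) : Clmx (fun _ => A).
Proof. by move=> i j; apply: clC. Qed.

Lemma clmx_M m n p (A : D -> 'M[K]_(m, n)) (B : D -> 'M[K]_(n, p)) :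
  Clmx A -> Clmx B -> Clmx (fun x => A x *m B x).
Proof.
move=> HA HB i j.
apply: clE (@cl_sum K D Cl clE clC clD _ (index_enum 'I_n) xpredT
   (fun k x => A x i k * B x k j) _) _.
  by move=> k _; apply: clM.
by move=> x; rewrite mxE.
Qed.

Lemma clmx_tr m n (A : D -> 'M[K]_(m, n)) : Clmx A -> Clmx (fun x => (A x)^T).
Proof. by move=> HA i j; apply: clE (HA j i) _ => x; rewrite mxE. Qed.

Lemma clmx_D m n (A B : D -> 'M[K]_(m, n)) : Clmx A -> Clmx B -> Clmx (fun x => A x + B x).
Proof. by move=> HA HB i j; apply: clE (clD (HA i j) (HB i j)) _ => x; rewrite mxE. Qed.

Lemma cl_det n (A : D -> 'M[K]_n) : Clmx A -> Cl (fun x => \det (A x)).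
Proof.
move=> HA.
apply: clE (@cl_sum K D Cl clE clC clD _ (index_enum {perm 'I_n}) xpredT
   (fun s x => (-1) ^+ s * \prod_i A x i (s i)) _) _.
  move=> s _; apply: clM; first exact: clC.
  apply: clE (@cl_prod K D Cl clE clC clM _ (index_enum 'I_n) xpredT (fun i x => A x i (s i)) _) _ => //.
by move=> x; rewrite /determinant; reflexivity.
Qed.

Lemma cl_trace n (A : D -> 'M[K]_n) : Clmx A -> Cl (fun x => \tr (A x)).
Proof.
move=> HA.
apply: clE (@cl_sum K D Cl clE clC clD _ (index_enum 'I_n) xpredT
   (fun i x => A x i i) _) _.
  by move=> i _; apply: HA.
by move=> x; rewrite /mxtrace.
Qed.

Definition Clpt (Z : D -> pt K) := forall i, Cl (fun x => coords (Z x) i).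

Lemma coordsE (z : pt K) (i : 'I_15) : coords z i =
  if (i < 3)%N then z.1.1 (inord i) 0 else if (i < 6)%N then z.1.2 (inord (i - 3)) 0
  else z.2 (inord ((i - 6) %/ 3)) (inord ((i - 6) %% 3)).
Proof. by case: z => [[v w] C]. Qed.

Lemma clpt_v Z : Clpt Z -> Clmx (fun x => (Z x).1.1).
Proof.
by move=> H i j; rewrite [j]ord1; apply: clE (H (iv i)) _ => x; rewrite coords_iv.
Qed.
Lemma clpt_w Z : Clpt Z -> Clmx (fun x => (Z x).1.2).
Proof.
by move=> H i j; rewrite [j]ord1; apply: clE (H (iw i)) _ => x; rewrite coords_iw.
Qed.
Lemma clpt_C Z : Clpt Z -> Clmx (fun x => (Z x).2).
Proof.
by move=> H i j; apply: clE (H (iC i j)) _ => x; rewrite coords_iC.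
Qed.

Lemma clpt_mk (V W : D -> 'cV[K]_3) (C : D -> 'M[K]_3) :
  Clmx V -> Clmx W -> Clmx C -> Clpt (fun x => (V x, W x, C x)).
Proof.
move=> HV HW HC i; apply: clE (_ : Cl (fun x => if (i < 3)%N then V x (inord i) 0
   else if (i < 6)%N then W x (inord (i - 3)) 0
   else C x (inord ((i - 6) %/ 3)) (inord ((i - 6) %% 3)))) _.
  by case: (i < 3)%N; last case: (i < 6)%N.
by move=> x; rewrite coordsE.
Qed.

Lemma clpt_act g1 g2 Z : Clpt Z -> Clpt (fun x => act g1 g2 (Z x)).
Proof.
move=> H.
suff H' : Clpt (fun x => (g1 *m (Z x).1.1, g2 *m (Z x).1.2, g2 *m (Z x).2 *m invmx g1)).
  by move=> i; apply: clE (H' i) _ => x; case: (Z x) => [[v w] C].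
apply: clpt_mk.
- by apply: clmx_M; [apply: clmx_C | apply: clpt_v].
- by apply: clmx_M; [apply: clmx_C | apply: clpt_w].
- by apply: clmx_M; [apply: clmx_M; [apply: clmx_C | apply: clpt_C] | apply: clmx_C].
Qed.

Lemma cl_ev (f : polyL K) Z : Clpt Z -> Cl (fun x => ev f (Z x)).
Proof.
move=> H; rewrite /ev.
exact: (@cl_meval K D Cl clE clC clD clM 15 f (fun i x => coords (Z x) i) H).
Qed.

End ClPt.


Section Grp.
Variable K : numClosedFieldType.
Local Notation pt := (pt K).

Lemma SO3_unit (g : 'M[K]_3) : SO3 g -> g \in unitmx.
Proof. by case=> H _; case: (mulmx1_unit H). Qed.

Lemma SO3_inv (g : 'M[K]_3) : SO3 g -> invmx g = g^T.
Proof.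
move=> Hg; have [H _] := Hg.
by rewrite -[invmx g]mul1mx -H -mulmxA mulmxV ?mulmx1 // SO3_unit.
Qed.

Lemma SO3_mulT (g : 'M[K]_3) : SO3 g -> g *m g^T = 1%:M.
Proof. by case=> H _; apply: mulmx1C. Qed.

Lemma SO3_1 : SO3 (1%:M : 'M[K]_3).
Proof. by split; rewrite ?trmx1 ?mulmx1 ?det1. Qed.

Lemma SO3_M (g h : 'M[K]_3) : SO3 g -> SO3 h -> SO3 (g *m h).
Proof.
move=> [Hg Dg] [Hh Dh]; split; last by rewrite det_mulmx Dg Dh mulr1.
by rewrite trmx_mul mulmxA -(mulmxA h^T) Hg mulmx1 Hh.
Qed.

Lemma inG_M (g1 g2 h1 h2 : 'M[K]_3) : inG g1 g2 -> inG h1 h2 -> inG (g1 *m h1) (g2 *m h2).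
Proof. by move=> [? ?] [? ?]; split; apply: SO3_M. Qed.

Lemma actE (g1 g2 : 'M[K]_3) (z : pt) :
  act g1 g2 z = (g1 *m z.1.1, g2 *m z.1.2, g2 *m z.2 *m invmx g1).
Proof. by case: z => [[v w] C]. Qed.

Lemma act_comp (g1 g2 h1 h2 : 'M[K]_3) (z : pt) : inG g1 g2 -> inG h1 h2 ->
  act g1 g2 (act h1 h2 z) = act (g1 *m h1) (g2 *m h2) z.
Proof.
move=> [G1 G2] [H1 H2]; rewrite !actE /=.
have GH1 : SO3 (g1 *m h1) by apply: SO3_M.
rewrite !SO3_inv // trmx_mul !mulmxA.
by [].
Qed.

Lemma act_1 (z : pt) : act 1%:M 1%:M z = z.
Proof. by case: z => [[v w] C]; rewrite /= invmx1 !mul1mx mulmx1. Qed.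

Lemma embed2_mx3 (A : 'M[K]_2) : embed2 A =
  mx3 (A 0 0) (A 0 1) 0 (A 1 0) (A 1 1) 0 0 0 (\det A).
Proof.
have E0 : (0 : 'I_(2+1)) = lshift 1 (0 : 'I_2) by apply: val_inj.
have E1 : (1 : 'I_(2+1)) = lshift 1 (1 : 'I_2) by apply: val_inj.
have E2 : (2 : 'I_(2+1)) = rshift 2 (0 : 'I_1) by apply: val_inj.
apply/matrixP => i j; rewrite [RHS]mxE.
case: (ord3_cases i) => ->; case: (ord3_cases j) => ->; rewrite /= ?E2 ?E0 ?E1 /embed2;
  rewrite ?(@block_mxEul K 2 1 2 1) ?(@block_mxEur K 2 1 2 1)
    ?(@block_mxEdl K 2 1 2 1) ?(@block_mxEdr K 2 1 2 1) ?mxE //.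
Qed.

Lemma embed2_SO3 (A : 'M[K]_2) : A^T *m A = 1%:M -> SO3 (embed2 A).
Proof.
move=> HA.
have dA : \det A ^+ 2 = 1.
  by rewrite expr2 -{1}det_tr -det_mulmx HA det1.
split; last by rewrite /embed2 (@det_ublock K 2 1) det_scalar1 -expr2.
move: HA; rewrite [A]mx2E embed2_mx3 det_mx2 !mxE /=.
move: (A 0 0) (A 0 1) (A 1 0) (A 1 1) => a b c d.
rewrite trmx2 mulmx2 => H.
have e1 : a * a + c * c = 1 by move/(congr1 (fun M : 'M[K]_2 => M 0 0)): H; rewrite !mxE.
have e2 : a * b + c * d = 0 by move/(congr1 (fun M : 'M[K]_2 => M 0 1)): H; rewrite !mxE.
have e4 : b * b + d * d = 1 by move/(congr1 (fun M : 'M[K]_2 => M 1 1)): H; rewrite !mxE.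
  rewrite trmx3 mulmx3 id3; congr mx3.
  - by rewrite !mul0r !addr0.
  - by rewrite !mul0r !addr0.
  - by rewrite !(mulr0, mul0r, addr0).
  - by rewrite !mul0r !addr0 (mulrC b a) (mulrC d c).
  - by rewrite !mul0r !addr0.
  - by rewrite !(mulr0, mul0r, addr0).
  - by rewrite !(mulr0, mul0r, addr0).
  - by rewrite !(mulr0, mul0r, addr0).
  - rewrite !(mulr0, mul0r, add0r).
    have -> : (a * d - b * c) * (a * d - b * c) = (a * a + c * c) * (b * b + d * d) - (a * b + c * d) * (a * b + c * d) by ring.
    by rewrite e1 e2 e4 mul1r mul0r subr0.
Qed.

Definition emb (t : 'I_5 -> K) : pt :=
  (col3 0 0 (t 0), col3 0 0 (t 1), mx3 (t 2) 0 0 0 (t 3) 0 0 0 (t 4)).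

Lemma Ssub_emb (z : pt) : Ssub z <-> exists t, z = emb t.
Proof.
split.
  move=> [x [y [l ->]]].
  exists (fun k : 'I_5 => nth 0 [:: x; y; l 0 0; l 0 1; l 0 2] k).
  rewrite /emb /=; congr (_, _, _).
  - by rewrite [LHS]col3E !mxE.
  - by rewrite [LHS]col3E !mxE.
  - by rewrite [LHS]mx3E !mxE.
move=> [t ->]; exists (t 0), (t 1), (\row_(i < 3) nth 0 [:: t 2; t 3; t 4] i).
rewrite /emb; congr (_, _, _).
- by rewrite [RHS]col3E !mxE.
- by rewrite [RHS]col3E !mxE.
- by rewrite [RHS]mx3E !mxE.
Qed.

Lemma X0_emb t : X0 (emb t).
Proof.
rewrite /X0 /emb !mxE /=; split => // b a.
by case: (ord3_cases b) => ->; case: (ord3_cases a) => ->; rewrite mxE.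
Qed.

Lemma X2_of_GX0 (z : pt) : GX0 z -> X2 z.
Proof. by move=> Hz p Hp; apply: Hp. Qed.

Lemma GX0_of_X0 (z : pt) : X0 z -> GX0 z.
Proof. by move=> Hz; exists 1%:M, 1%:M, z; split => //; [split; apply: SO3_1 | rewrite act_1]. Qed.

Lemma S_X2 (z : pt) : Ssub z -> X2 z.
Proof. by move/Ssub_emb => [t ->]; apply/X2_of_GX0/GX0_of_X0/X0_emb. Qed.

Lemma id2 : (1%:M : 'M[K]_2) = mx2 1 0 0 1.
Proof.
apply/matrixP => i j; rewrite !mxE.
by case: (ord2_cases i) => ->; case: (ord2_cases j) => ->.
Qed.

Lemma S2_cases (s : 'S_2) : (s 0 = 0 /\ s 1 = 1) \/ (s 0 = 1 /\ s 1 = 0).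
Proof.
case: (ord2_cases (s 0)) => H0; case: (ord2_cases (s 1)) => H1.
- by move: (perm_inj (etrans H0 (esym H1))).
- by left.
- by right.
- by move: (perm_inj (etrans H0 (esym H1))).
Qed.

Lemma sign_sq (x : K) : x = 1 \/ x = -1 -> x * x = 1.
Proof. by case=> ->; rewrite ?mulr1 ?mulrNN ?mulr1. Qed.

Lemma signed_perm_orth s (A : 'M[K]_2) : signed_perm s A -> A^T *m A = 1%:M.
Proof.
move=> H; have H00 := H 0 0; have H01 := H 0 1; have H10 := H 1 0; have H11 := H 1 1.
rewrite [A]mx2E trmx2 mulmx2 id2.
case: (S2_cases s) => [[-> ->]|[-> ->]] /= in H00 H01 H10 H11 *.
- rewrite H01 H10 !(mulr0, mul0r, addr0, add0r) !sign_sq //.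
- rewrite H00 H11 !(mulr0, mul0r, addr0, add0r) !sign_sq //.
Qed.

Lemma inN_inG (g1 g2 : 'M[K]_3) : inN g1 g2 -> inG g1 g2.
Proof.
move=> [s [A1 [A2 [H1 H2 -> ->]]]].
by split; apply: embed2_SO3; apply: signed_perm_orth H1 || apply: signed_perm_orth H2.
Qed.

End Grp.


Section Dec.
Variable K : numClosedFieldType.

Lemma rot_alg (c2 s2 Cm Sm Cp Sp : K) :
  c2 ^+ 2 + s2 ^+ 2 = 1 -> c2 ^+ 2 - s2 ^+ 2 = Cp * Cm - Sp * Sm ->
  2 * c2 * s2 = Cp * Sm + Sp * Cm -> Cm ^+ 2 + Sm ^+ 2 = 1 ->
  let c1 := c2 * Cm + s2 * Sm in let s1 := s2 * Cm - c2 * Sm in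
  [/\ c1 * c2 + s1 * s2 = Cm, s2 * c1 - c2 * s1 = Sm,
      c1 * c2 - s1 * s2 = Cp, s2 * c1 + c2 * s1 = Sp & c1 ^+ 2 + s1 ^+ 2 = 1].
Proof.
move=> H1 H2 H3 H4 c1 s1; split.
- have -> : c1 * c2 + s1 * s2 = Cm * (c2 ^+ 2 + s2 ^+ 2) by rewrite /c1 /s1; ring.
  by rewrite H1 mulr1.
- have -> : s2 * c1 - c2 * s1 = Sm * (c2 ^+ 2 + s2 ^+ 2) by rewrite /c1 /s1; ring.
  by rewrite H1 mulr1.
- have -> : c1 * c2 - s1 * s2 = Cm * (c2 ^+ 2 - s2 ^+ 2) + Sm * (2 * c2 * s2) by rewrite /c1 /s1; ring.
  rewrite H2 H3.
  have -> : Cm * (Cp * Cm - Sp * Sm) + Sm * (Cp * Sm + Sp * Cm) = Cp * (Cm ^+ 2 + Sm ^+ 2) by ring.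
  by rewrite H4 mulr1.
- have -> : s2 * c1 + c2 * s1 = Cm * (2 * c2 * s2) - Sm * (c2 ^+ 2 - s2 ^+ 2) by rewrite /c1 /s1; ring.
  rewrite H2 H3.
  have -> : Cm * (Cp * Sm + Sp * Cm) - Sm * (Cp * Cm - Sp * Sm) = Sp * (Cm ^+ 2 + Sm ^+ 2) by ring.
  by rewrite H4 mulr1.
- have -> : c1 ^+ 2 + s1 ^+ 2 = (c2 ^+ 2 + s2 ^+ 2) * (Cm ^+ 2 + Sm ^+ 2) by rewrite /c1 /s1; ring.
  by rewrite H1 H4 mulr1.
Qed.

Lemma half_angle (wc ws : K) : wc ^+ 2 + ws ^+ 2 = 1 ->
  exists c2 s2 : K, [/\ c2 ^+ 2 + s2 ^+ 2 = 1, c2 ^+ 2 - s2 ^+ 2 = wc & 2 * c2 * s2 = ws].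
Proof.
move=> H.
have two0 : (2 : K) != 0 by rewrite pnatr_eq0.
case: (eqVneq (1 + wc) 0) => h0.
  have wc1 : wc = -1 by apply/eqP; rewrite -subr_eq0 opprK addrC h0.
  have ws2 : ws ^+ 2 = 0.
    by move: H; rewrite wc1 => H'; rewrite -(subrr (1:K)) -{1}H'; ring.
  have ws0 : ws = 0.
    have: ws ^+ 2 == 0 by rewrite ws2.
    by rewrite expf_eq0 /= => /eqP.
  exists 0, 1; rewrite wc1 ws0; split; ring.
pose h := (1 + wc) / 2.
have h0' : h != 0 by rewrite /h mulf_neq0 // invr_eq0.
pose c2 := sqrtC h.
have c2sq : c2 ^+ 2 = h by rewrite sqrtCK.
have c20 : c2 != 0 by apply: contra h0' => /eqP c0; rewrite -c2sq c0 expr0n.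
exists c2, (ws / (2 * c2)).
have ws2 : ws ^+ 2 = (1 - wc) * (2 * h).
  rewrite /h; have -> : ws ^+ 2 = 1 - wc ^+ 2 by rewrite -H; ring.
  by field.
split.
- have -> : c2 ^+ 2 + (ws / (2 * c2)) ^+ 2 = c2 ^+ 2 + ws ^+ 2 / (4 * c2 ^+ 2) by field.
  rewrite c2sq ws2 /h; field.
  by [].
- have -> : c2 ^+ 2 - (ws / (2 * c2)) ^+ 2 = c2 ^+ 2 - ws ^+ 2 / (4 * c2 ^+ 2) by field.
  rewrite c2sq ws2 /h; field.
  by [].
- by field.
Qed.

Lemma sqrtC_nz (x : K) : x != 0 -> sqrtC x != 0.
Proof. by apply: contra => /eqP H; rewrite -(sqrtCK x) H expr0n. Qed.

Lemma dec2 (m11 m12 m21 m22 : K) :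
  (m11 + m22) ^+ 2 + (m21 - m12) ^+ 2 != 0 -> (m11 - m22) ^+ 2 + (m21 + m12) ^+ 2 != 0 ->
  exists c1 s1 c2 s2 l1 l2 : K,
  (c1 ^+ 2 + s1 ^+ 2 = 1 /\ c2 ^+ 2 + s2 ^+ 2 = 1) /\ [/\ m11 = c2 * c1 * l1 + s2 * s1 * l2,
      m12 = c2 * s1 * l1 - s2 * c1 * l2, m21 = s2 * c1 * l1 - c2 * s1 * l2 &
      m22 = s2 * s1 * l1 + c2 * c1 * l2].
Proof.
set p := m11 + m22; set q := m21 - m12; set r := m11 - m22; set u := m21 + m12.
move=> Ha Hb.
set mu := sqrtC (p ^+ 2 + q ^+ 2); set nu := sqrtC (r ^+ 2 + u ^+ 2).
have mu0 : mu != 0 by apply: sqrtC_nz.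
have nu0 : nu != 0 by apply: sqrtC_nz.
have mu2 : mu ^+ 2 = p ^+ 2 + q ^+ 2 by rewrite sqrtCK.
have nu2 : nu ^+ 2 = r ^+ 2 + u ^+ 2 by rewrite sqrtCK.
set Cm := p / mu; set Sm := q / mu; set Cp := r / nu; set Sp := u / nu.
have Hm : Cm ^+ 2 + Sm ^+ 2 = 1.
  have -> : Cm ^+ 2 + Sm ^+ 2 = (p ^+ 2 + q ^+ 2) / mu ^+ 2 by rewrite /Cm /Sm; field.
  by rewrite mu2 divff // -mu2 expf_neq0.
have Hp : Cp ^+ 2 + Sp ^+ 2 = 1.
  have -> : Cp ^+ 2 + Sp ^+ 2 = (r ^+ 2 + u ^+ 2) / nu ^+ 2 by rewrite /Cp /Sp; field.
  by rewrite nu2 divff // -nu2 expf_neq0.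
have Hw : (Cp * Cm - Sp * Sm) ^+ 2 + (Cp * Sm + Sp * Cm) ^+ 2 = 1.
  have -> : (Cp * Cm - Sp * Sm) ^+ 2 + (Cp * Sm + Sp * Cm) ^+ 2 =
    (Cp ^+ 2 + Sp ^+ 2) * (Cm ^+ 2 + Sm ^+ 2) by ring.
  by rewrite Hp Hm mulr1.
have [c2 [s2 [H1 H2 H3]]] := half_angle Hw.
have [E1 E2 E3 E4 E5] := rot_alg H1 H2 H3 Hm.
move: E1 E2 E3 E4 E5.
set c1 := c2 * Cm + s2 * Sm; set s1 := s2 * Cm - c2 * Sm => E1 E2 E3 E4 E5.
exists c1, s1, c2, s2, ((mu + nu) / 2), ((mu - nu) / 2); split; first by split.
split.
- have -> : c2 * c1 * ((mu + nu) / 2) + s2 * s1 * ((mu - nu) / 2) =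
    (c1 * c2 + s1 * s2) * mu / 2 + (c1 * c2 - s1 * s2) * nu / 2 by ring.
  rewrite E1 E3 /Cm /Cp /p /r; field.
  by rewrite mu0 nu0.
- have -> : c2 * s1 * ((mu + nu) / 2) - s2 * c1 * ((mu - nu) / 2) =
    - (s2 * c1 - c2 * s1) * mu / 2 + (s2 * c1 + c2 * s1) * nu / 2 by ring.
  rewrite E2 E4 /Sm /Sp /q /u; field.
  by rewrite mu0 nu0.
- have -> : s2 * c1 * ((mu + nu) / 2) - c2 * s1 * ((mu - nu) / 2) =
    (s2 * c1 - c2 * s1) * mu / 2 + (s2 * c1 + c2 * s1) * nu / 2 by ring.
  rewrite E2 E4 /Sm /Sp /q /u; field.
  by rewrite mu0 nu0.
- have -> : s2 * s1 * ((mu + nu) / 2) + c2 * c1 * ((mu - nu) / 2) =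
    (c1 * c2 + s1 * s2) * mu / 2 - (c1 * c2 - s1 * s2) * nu / 2 by ring.
  rewrite E1 E3 /Cm /Cp /p /r; field.
  by rewrite mu0 nu0.
Qed.

End Dec.

Section ClMx3.
Variables (K : numClosedFieldType) (D : Type) (Cl : (D -> K) -> Prop).
Hypotheses (clE : forall f g, Cl f -> (forall x, f x = g x) -> Cl g).

Lemma clmx_col3 f1 f2 f3 : Cl f1 -> Cl f2 -> Cl f3 ->
  Clmx Cl (fun x => col3 (f1 x) (f2 x) (f3 x)).
Proof.
move=> H1 H2 H3 i j; rewrite [j]ord1.
by case: (ord3_cases i) => ->; [apply: clE H1 _| apply: clE H2 _| apply: clE H3 _] => x; rewrite mxE.
Qed.

Lemma clmx_mx3 f1 f2 f3 f4 f5 f6 f7 f8 f9 : Cl f1 -> Cl f2 -> Cl f3 -> Cl f4 -> Cl f5 ->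
  Cl f6 -> Cl f7 -> Cl f8 -> Cl f9 ->
  Clmx Cl (fun x => mx3 (f1 x) (f2 x) (f3 x) (f4 x) (f5 x) (f6 x) (f7 x) (f8 x) (f9 x)).
Proof.
move=> H1 H2 H3 H4 H5 H6 H7 H8 H9 i j.
case: (ord3_cases i) => ->; case: (ord3_cases j) => ->;
 first [ by apply: (clE H1) => x; rewrite mxE | by apply: (clE H2) => x; rewrite mxE
       | by apply: (clE H3) => x; rewrite mxE | by apply: (clE H4) => x; rewrite mxE
       | by apply: (clE H5) => x; rewrite mxE | by apply: (clE H6) => x; rewrite mxE
       | by apply: (clE H7) => x; rewrite mxE | by apply: (clE H8) => x; rewrite mxE
       | by apply: (clE H9) => x; rewrite mxE ].
Qed.

End ClMx3.

Section Dense.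
Variable K : numClosedFieldType.
Local Notation pt := (pt K).

Definition rot (c s : K) : 'M[K]_2 := mx2 c (- s) s c.

Lemma rot_SO3 c s : c ^+ 2 + s ^+ 2 = 1 -> SO3 (embed2 (rot c s)).
Proof.
move=> H; apply: embed2_SO3; rewrite /rot trmx2 mulmx2 id2.
by congr mx2; rewrite -?H; ring.
Qed.

Lemma act_rot_emb c1 s1 c2 s2 (t : 'I_5 -> K) :
  c1 ^+ 2 + s1 ^+ 2 = 1 -> c2 ^+ 2 + s2 ^+ 2 = 1 ->
  act (embed2 (rot c1 s1)) (embed2 (rot c2 s2)) (emb t) =
  (col3 0 0 (t 0), col3 0 0 (t 1),
   mx3 (c2 * c1 * t 2 + s2 * s1 * t 3) (c2 * s1 * t 2 - s2 * c1 * t 3) 0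
       (s2 * c1 * t 2 - c2 * s1 * t 3) (s2 * s1 * t 2 + c2 * c1 * t 3) 0 0 0 (t 4)).
Proof.
move=> H1 H2; rewrite actE (SO3_inv (rot_SO3 H1)) /emb /= !embed2_mx3 /rot !det_mx2 !mxE /=.
have -> : c1 * c1 - - s1 * s1 = 1 by rewrite -H1; ring.
have -> : c2 * c2 - - s2 * s2 = 1 by rewrite -H2; ring.
rewrite trmx3 !mulmx3c !mulmx3.
congr (_, _, _); first (by congr col3; ring); first (by congr col3; ring).
by congr mx3; ring.
Qed.

Lemma quad_nz (a b : K) : exists x, (x + a) ^+ 2 + b ^+ 2 != 0.
Proof.
case: (eqVneq (b ^+ 2) 0) => Hb.
  by exists (1 - a); rewrite Hb addr0 subrK expr1n oner_eq0.
by exists (- a); rewrite addNr expr0n /= add0r.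
Qed.

Lemma dense (F : polyL K) :
  (forall g1 g2 t, inG g1 g2 -> ev F (act g1 g2 (emb t)) = 0) ->
  forall z, X2 z -> ev F z = 0.
Proof.
move=> HF z Hz; apply: Hz => z' [g1 [g2 [[[v w] C] [HG HX0 ->]]]].
case: HX0 => v0 v1 w0 w1 HC.
have Ev : v = col3 0 0 (v 2 0) by rewrite [LHS]col3E v0 v1.
have Ew : w = col3 0 0 (w 2 0) by rewrite [LHS]col3E w0 w1.
have EC : C = mx3 (C 0 0) (C 0 1) 0 (C 1 0) (C 1 1) 0 0 0 (C 2 2).
  by rewrite [LHS]mx3E (HC 0 2) ?(HC 1 2) ?(HC 2 0) ?(HC 2 1).
move: (v 2 0) (w 2 0) (C 0 0) (C 0 1) (C 1 0) (C 1 1) (C 2 2) Ev Ew EC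
  => x y m11 m12 m21 m22 c -> -> ->.
pose P (tau : K) : pt := (col3 0 0 x, col3 0 0 y, mx3 (m11 + tau) m12 0 m21 m22 0 0 0 c).
pose Phi tau := ev F (act g1 g2 (P tau)).
have UPhi : UP Phi.
  apply: (cl_ev (@UP_E K) (@UP_C K) (@UP_D K) (@UP_M K)).
  apply: (clpt_act (@UP_E K) (@UP_C K) (@UP_D K) (@UP_M K)).
  apply: (clpt_mk (@UP_E K)).
  - exact: (clmx_C (@UP_C K)).
  - exact: (clmx_C (@UP_C K)).
  - apply: (clmx_mx3 (@UP_E K)); try exact: UP_C.
    by apply: UP_D; [exact: UP_C | exact: UP_X].
pose Na tau := ((m11 + tau) + m22) ^+ 2 + (m21 - m12) ^+ 2.
pose Nb tau := ((m11 + tau) - m22) ^+ 2 + (m21 + m12) ^+ 2.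
have UNa : UP Na.
  apply: UP_D; last exact: UP_C.
  apply: (cl_exp (@UP_E K) (@UP_C K) (@UP_M K)).
  by apply: UP_D; [apply: UP_D; [exact: UP_C | exact: UP_X] | exact: UP_C].
have UNb : UP Nb.
  apply: UP_D; last exact: UP_C.
  apply: (cl_exp (@UP_E K) (@UP_C K) (@UP_M K)).
  by apply: UP_D; [apply: UP_D; [exact: UP_C | exact: UP_X] | exact: UP_C].
have key : forall tau, Phi tau * Na tau * Nb tau = 0.
  move=> tau.
  case: (eqVneq (Na tau) 0) => Ha; first by rewrite Ha mulr0 mul0r.
  case: (eqVneq (Nb tau) 0) => Hb; first by rewrite Hb mulr0.
  have [c1 [s1 [c2 [s2 [l1 [l2 [[H1 H2] [E11 E12 E21 E22]]]]]]]] := dec2 Ha Hb.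
  pose t : 'I_5 -> K := fun k => nth 0 [:: x; y; l1; l2; c] k.
  have EP : P tau = act (embed2 (rot c1 s1)) (embed2 (rot c2 s2)) (emb t).
    by rewrite act_rot_emb //= /P E11 E12 E21 E22.
  have HR : inG (embed2 (rot c1 s1)) (embed2 (rot c2 s2)) by split; apply: rot_SO3.
  by rewrite /Phi EP act_comp // HF ?mul0r //; apply: inG_M.
apply/eqP; apply: contraT => H0.
have Phi0 : Phi 0 != 0 by rewrite /Phi /P addr0.
have [a1 Ha1] := quad_nz (m11 + m22) (m21 - m12).
have HNa : Na a1 != 0 by rewrite /Na (_ : m11 + a1 + m22 = a1 + (m11 + m22)) //; ring.
have [b1 Hb1] := quad_nz (m11 - m22) (m21 + m12).
have HNb : Nb b1 != 0 by rewrite /Nb (_ : m11 + b1 - m22 = b1 + (m11 - m22)) //; ring.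
have [t1 Ht1] := UP_nz UPhi Phi0 UNa HNa.
have [t2 Ht2] := UP_nz (UP_M UPhi UNa) Ht1 UNb HNb.
by rewrite key eqxx in Ht2.
Qed.

End Dense.


Section Parts.
Variable K : numClosedFieldType.
Local Notation pt := (pt K).

Definition PFpt (f : pt -> K) := exists P : polyL K, forall z, ev P z = f z.

Lemma PFpt_E f g : PFpt f -> (forall x, f x = g x) -> PFpt g.
Proof. by move=> [P HP] H; exists P => z; rewrite HP. Qed.
Lemma PFpt_C c : PFpt (fun _ => c).
Proof. by exists c%:MP => z; rewrite /ev mevalC. Qed.
Lemma PFpt_D f g : PFpt f -> PFpt g -> PFpt (fun x => f x + g x).
Proof. by move=> [P HP] [Q HQ]; exists (P + Q) => z; rewrite /ev mevalD -/(ev P z) -/(ev Q z) HP HQ. Qed.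
Lemma PFpt_M f g : PFpt f -> PFpt g -> PFpt (fun x => f x * g x).
Proof. by move=> [P HP] [Q HQ]; exists (P * Q) => z; rewrite /ev mevalM -/(ev P z) -/(ev Q z) HP HQ. Qed.
Lemma Clpt_id : Clpt PFpt id.
Proof. by move=> i; exists 'X_i => z; rewrite /ev mevalXU. Qed.

Lemma PFpt_ev_act (q : polyL K) g1 g2 : PFpt (fun z => ev q (act g1 g2 z)).
Proof.
apply: (cl_ev PFpt_E PFpt_C PFpt_D PFpt_M).
exact: (clpt_act PFpt_E PFpt_C PFpt_D PFpt_M _ _ Clpt_id).
Qed.

Lemma Clpt_emb : Clpt (@PF K 5) (@emb K).
Proof.
apply: (clpt_mk (@PF_E K 5)).
- by apply: (clmx_col3 (@PF_E K 5)); [exact: PF_C | exact: PF_C | exact: PF_X].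
- by apply: (clmx_col3 (@PF_E K 5)); [exact: PF_C | exact: PF_C | exact: PF_X].
- by apply: (clmx_mx3 (@PF_E K 5)); (exact: PF_C || exact: PF_X).
Qed.

Lemma PF_ev_emb (f : polyL K) : PF (fun t => ev f (emb t)).
Proof. exact: (cl_ev (@PF_E K 5) (@PF_C K 5) (@PF_D K 5) (@PF_M K 5) f Clpt_emb). Qed.

Lemma PF_ev_act_emb (f : polyL K) g1 g2 : PF (fun t => ev f (act g1 g2 (emb t))).
Proof.
apply: (cl_ev (@PF_E K 5) (@PF_C K 5) (@PF_D K 5) (@PF_M K 5) f).
exact: (clpt_act (@PF_E K 5) (@PF_C K 5) (@PF_D K 5) (@PF_M K 5) _ _ Clpt_emb).
Qed.

Local Notation X := (@X2 K).
Local Notation S := (@Ssub K).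

Lemma ratfun_S_ex (p q : polyL K) : ratfun_on S p q -> exists t, ev q (emb t) != 0.
Proof.
move=> H; apply: NNPP => H'; apply: H => z /Ssub_emb [t ->].
by apply/eqP; apply: contraT => Ht; case: H'; exists t.
Qed.

Lemma part1 (p q : polyL K) :
  ratfun_on X p q -> invariant_on X (@inG K) p q ->
  exists p' q' : polyL K,
    [/\ ratfun_on X p' q', same_on X p q p' q' & ratfun_on S p' q'].
Proof.
move=> Hq Hinv.
have [g1 [g2 [t [HG Ht]]]] : exists g1 g2 t, inG g1 g2 /\ ev q (act g1 g2 (emb t)) != 0.
  apply: NNPP => H; apply: Hq; apply: dense => g1 g2 t HG.
  by apply/eqP; apply: contraT => Ht; case: H; exists g1, g2, t.
have [p' Hp'] := PFpt_ev_act p g1 g2.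
have [q' Hq'] := PFpt_ev_act q g1 g2.
have Sz : S (emb t) by apply/Ssub_emb; exists t.
exists p', q'; split.
- by move=> H; move: Ht; rewrite -Hq' H ?eqxx //; apply: S_X2.
- move=> z Xz; rewrite Hp' Hq'.
  have := Hinv g1 g2 HG z Xz.
  by move=> /eqP; rewrite subr_eq0 => /eqP ->; rewrite subrr.
- by move=> H; move: Ht; rewrite -Hq' H ?eqxx.
Qed.

Lemma part2 (p q : polyL K) :
  ratfun_on X p q -> invariant_on X (@inG K) p q -> ratfun_on S p q ->
  invariant_on S (@inN K) p q.
Proof.
move=> _ Hinv _ g1 g2 HN z Sz.
by apply: Hinv; [apply: inN_inG | apply: S_X2].
Qed.

Lemma part3 (p1 q1 p2 q2 : polyL K) :
  ratfun_on X p1 q1 -> invariant_on X (@inG K) p1 q1 -> ratfun_on S p1 q1 ->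
  ratfun_on X p2 q2 -> invariant_on X (@inG K) p2 q2 -> ratfun_on S p2 q2 ->
  same_on S p1 q1 p2 q2 -> same_on X p1 q1 p2 q2.
Proof.
move=> _ I1 S1 _ I2 S2 Hsame.
have [f Hf] : PFpt (fun z => ev p1 z * ev q2 z - ev p2 z * ev q1 z).
  apply: PFpt_D; first by apply: PFpt_M; [exists p1 | exists q2].
  apply: (PFpt_E (f := fun z => (-1) * (ev p2 z * ev q1 z))); last by move=> x; rewrite mulN1r.
  by apply: PFpt_M; [apply: PFpt_C | apply: PFpt_M; [exists p2 | exists q1]].
move=> z Xz; rewrite -Hf; move: z Xz; apply: dense => g1 g2 t HG.
apply/eqP; apply: contraT => Hne.
have [t1 Ht1] := ratfun_S_ex S1.
have [t2 Ht2] := ratfun_S_ex S2.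
have [t3 Ht3] := PF_nz (PF_ev_act_emb f g1 g2) (PF_ev_emb q1) Hne Ht1.
have [t4 Ht4] := PF_nz (PF_M (PF_ev_act_emb f g1 g2) (PF_ev_emb q1)) (PF_ev_emb q2) Ht3 Ht2.
suff E : (ev f (act g1 g2 (emb t4)) * ev q1 (emb t4)) * ev q2 (emb t4) = 0.
  by rewrite E eqxx in Ht4.
have St : S (emb t4) by apply/Ssub_emb; exists t4.
have Xt := S_X2 St.
have e1 := I1 g1 g2 HG _ Xt; have e2 := I2 g1 g2 HG _ Xt; have e3 := Hsame _ St.
rewrite Hf.
set s := emb t4 in e1 e2 e3 *; set gs := act g1 g2 s in e1 e2 e3 *.
move/eqP: e1; rewrite subr_eq0 => /eqP e1.
move/eqP: e2; rewrite subr_eq0 => /eqP e2.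
move/eqP: e3; rewrite subr_eq0 => /eqP e3.
have -> : (ev p1 gs * ev q2 gs - ev p2 gs * ev q1 gs) * ev q1 s * ev q2 s =
   (ev p1 gs * ev q1 s) * ev q2 gs * ev q2 s - (ev p2 gs * ev q2 s) * ev q1 gs * ev q1 s by ring.
rewrite e1 e2.
have -> : ev p1 s * ev q1 gs * ev q2 gs * ev q2 s - ev p2 s * ev q2 gs * ev q1 gs * ev q1 s =
   ev q1 gs * ev q2 gs * (ev p1 s * ev q2 s - ev p2 s * ev q1 s) by ring.
by rewrite e3 subrr mulr0.
Qed.

End Parts.


Section Invs.
Variable K : numClosedFieldType.
Local Notation pt := (pt K).

Definition Ginv (P : polyL K) := forall g1 g2 z, inG g1 g2 -> ev P (act g1 g2 z) = ev P z.

Lemma Ginv_M P Q : Ginv P -> Ginv Q -> Ginv (P * Q).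
Proof. by move=> HP HQ g1 g2 z HG; rewrite /ev !mevalM -!/(ev _ _) HP ?HQ. Qed.
Lemma Ginv_D P Q : Ginv P -> Ginv Q -> Ginv (P + Q).
Proof. by move=> HP HQ g1 g2 z HG; rewrite /ev !mevalD -!/(ev _ _) HP ?HQ. Qed.
Lemma Ginv_C c : Ginv c%:MP.
Proof. by move=> g1 g2 z HG; rewrite /ev !mevalC. Qed.

Lemma ex_inv (f : pt -> K) : PFpt f -> (forall g1 g2 z, inG g1 g2 -> f (act g1 g2 z) = f z) ->
  exists P, Ginv P /\ forall z, ev P z = f z.
Proof.
move=> [P HP] Hf; exists P; split => // g1 g2 z HG.
by rewrite !HP Hf.
Qed.

Local Notation clE := (@PFpt_E K).
Local Notation clC := (@PFpt_C K).
Local Notation clD := (@PFpt_D K).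
Local Notation clM := (@PFpt_M K).

Lemma Cv : Clmx (@PFpt K) (fun z : pt => z.1.1).
Proof. exact: (clpt_v clE (@Clpt_id K)). Qed.
Lemma Cw : Clmx (@PFpt K) (fun z : pt => z.1.2).
Proof. exact: (clpt_w clE (@Clpt_id K)). Qed.
Lemma CC : Clmx (@PFpt K) (fun z : pt => z.2).
Proof. exact: (clpt_C clE (@Clpt_id K)). Qed.

Lemma dot3 a b c x y z : ((col3 a b c)^T *m col3 x y z : 'M[K]_1) 0 0 = a * x + b * y + c * z.
Proof. by rewrite !mxE sum3 !mxE. Qed.
Lemma tr3 (a b c d e f g h k : K) : \tr (mx3 a b c d e f g h k) = a + e + k.
Proof. by rewrite /mxtrace sum3 /mx3 !mxE. Qed.
Lemma det_diag3 (a e k : K) : \det (mx3 a 0 0 0 e 0 0 0 k) = a * e * k.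
Proof.
have -> : mx3 a 0 0 0 e 0 0 0 k = diag_mx (\row_(i < 3) nth 0 [:: a; e; k] i).
  apply/matrixP => i j; rewrite !mxE.
  by case: (ord3_cases i) => ->; case: (ord3_cases j) => ->; rewrite /= ?mxE /= ?mulr1n ?mulr0n.
by rewrite det_diag !big_ord_recr big_ord0 /= !mxE /= mul1r.
Qed.

Lemma SO3_Tmul (g : 'M[K]_3) : SO3 g -> g^T *m g = 1%:M.
Proof. by case. Qed.

Lemma SO3_K (g : 'M[K]_3) m (X : 'M[K]_(3, m)) : SO3 g -> g^T *m (g *m X) = X.
Proof. by move=> Hg; rewrite mulmxA SO3_Tmul // mul1mx. Qed.

Lemma inv_u1 : exists P, Ginv P /\ forall t, ev P (emb t) = t 0 ^+ 2.
Proof.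
pose f := (fun z : pt => ((z.1.1)^T *m z.1.1) 0 0).
have H1 : @PFpt K f.
  by apply: (clmx_M clE clC clD clM); [apply: (clmx_tr clE); apply: Cv | apply: Cv].
have H2 : forall g1 g2 z, inG g1 g2 -> f (act g1 g2 z) = f z.
  move=> g1 g2 z [G1 G2]; rewrite /f actE /= trmx_mul.
  by rewrite -(mulmxA _ g1^T) (mulmxA g1^T) SO3_Tmul // mul1mx.
have [P [HP E]] := ex_inv H1 H2.
by exists P; split => // t; rewrite E /f /emb /= dot3; ring.
Qed.

Lemma inv_u2 : exists P, Ginv P /\ forall t, ev P (emb t) = t 1 ^+ 2.
Proof.
pose f := (fun z : pt => ((z.1.2)^T *m z.1.2) 0 0).
have H1 : @PFpt K f.
  by apply: (clmx_M clE clC clD clM); [apply: (clmx_tr clE); apply: Cw | apply: Cw].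
have H2 : forall g1 g2 z, inG g1 g2 -> f (act g1 g2 z) = f z.
  move=> g1 g2 z [G1 G2]; rewrite /f actE /= trmx_mul.
  by rewrite -(mulmxA _ g2^T) (mulmxA g2^T) SO3_Tmul // mul1mx.
have [P [HP E]] := ex_inv H1 H2.
by exists P; split => // t; rewrite E /f /emb /= dot3; ring.
Qed.

Lemma inv_u3 : exists P, Ginv P /\ forall t, ev P (emb t) = t 0 * t 1 * t 4.
Proof.
pose f := (fun z : pt => ((z.1.2)^T *m z.2 *m z.1.1) 0 0).
have H1 : @PFpt K f.
  apply: (clmx_M clE clC clD clM); last exact: Cv.
  by apply: (clmx_M clE clC clD clM); [apply: (clmx_tr clE); apply: Cw | apply: CC].
have H2 : forall g1 g2 z, inG g1 g2 -> f (act g1 g2 z) = f z.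
  move=> g1 g2 z [G1 G2]; rewrite /f actE /= trmx_mul.
  rewrite -!mulmxA (mulmxA g2^T) SO3_Tmul // mul1mx.
  by rewrite (mulmxA (invmx g1)) mulVmx ?SO3_unit // mul1mx.
have [P [HP E]] := ex_inv H1 H2.
exists P; split => // t; rewrite E /f /emb /= -mulmxA mulmx3c dot3; ring.
Qed.

Lemma inv_u4 : exists P, Ginv P /\ forall t, ev P (emb t) = t 2 * t 3 * t 4.
Proof.
pose f := (fun z : pt => \det z.2).
have H1 : @PFpt K f.
  exact: (cl_det clE clC clD clM CC).
have H2 : forall g1 g2 z, inG g1 g2 -> f (act g1 g2 z) = f z.
  move=> g1 g2 z [G1 G2]; rewrite /f actE /= !det_mulmx det_inv.
  by case: G1 => _ ->; case: G2 => _ ->; rewrite invr1 mul1r mulr1.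
have [P [HP E]] := ex_inv H1 H2.
by exists P; split => // t; rewrite E /f /emb /= det_diag3.
Qed.

Lemma inv_u5 : exists P, Ginv P /\ forall t, ev P (emb t) = t 0 ^+ 2 * t 4 ^+ 2.
Proof.
pose f := (fun z : pt => ((z.1.1)^T *m (z.2)^T *m z.2 *m z.1.1) 0 0).
have H1 : @PFpt K f.
  apply: (clmx_M clE clC clD clM); last exact: Cv.
  apply: (clmx_M clE clC clD clM); last exact: CC.
  by apply: (clmx_M clE clC clD clM); apply: (clmx_tr clE); [apply: Cv | apply: CC].
have H2 : forall g1 g2 z, inG g1 g2 -> f (act g1 g2 z) = f z.
  move=> g1 g2 z [G1 G2]; rewrite /f actE /= !trmx_mul !SO3_inv // trmxK.
  by rewrite -!mulmxA (SO3_K _ G1) (SO3_K _ G2) (SO3_K _ G1).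
have [P [HP E]] := ex_inv H1 H2.
exists P; split => // t; rewrite E /f /emb /= trmx3 -!mulmxA !mulmx3c dot3; ring.
Qed.

Lemma inv_u6 : exists P, Ginv P /\ forall t, ev P (emb t) = t 2 ^+ 2 + t 3 ^+ 2 + t 4 ^+ 2.
Proof.
pose f := (fun z : pt => \tr ((z.2)^T *m z.2)).
have H1 : @PFpt K f.
  apply: (cl_trace clE clC clD).
  by apply: (clmx_M clE clC clD clM); [apply: (clmx_tr clE); apply: CC | apply: CC].
have H2 : forall g1 g2 z, inG g1 g2 -> f (act g1 g2 z) = f z.
  move=> g1 g2 z [G1 G2]; rewrite /f actE /= !trmx_mul !SO3_inv // trmxK.
  rewrite -!mulmxA (mulmxA g2^T) SO3_Tmul // mul1mx.
  by rewrite mxtrace_mulC -!mulmxA SO3_Tmul // mulmx1.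
have [P [HP E]] := ex_inv H1 H2.
exists P; split => // t; rewrite E /f /emb /= trmx3 mulmx3 tr3; ring.
Qed.

End Invs.


Section Lifts.
Variable K : numClosedFieldType.
Local Notation pt := (pt K).
Implicit Types (t : 'I_5 -> K).

Definition gen t := t 0 != 0 /\ t 4 != 0.

Definition Lift (phi : ('I_5 -> K) -> K) := exists n d : polyL K,
  [/\ Ginv n, Ginv d & forall t, gen t -> ev d (emb t) != 0 /\ ev n (emb t) = ev d (emb t) * phi t].

Lemma Lift_E phi psi : Lift phi -> (forall t, gen t -> phi t = psi t) -> Lift psi.
Proof.
move=> [n [d [Hn Hd H]]] E; exists n, d; split => // t Ht.
by have [? ?] := H t Ht; rewrite -E.
Qed.

Lemma Lift_poly (P : polyL K) phi : Ginv P -> (forall t, ev P (emb t) = phi t) -> Lift phi.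
Proof.
move=> HP E; exists P, 1; split => //; first exact: (Ginv_C 1).
by move=> t _; rewrite /ev meval1 mul1r oner_eq0 -E.
Qed.

Lemma Lift_C c : Lift (fun _ => c).
Proof. by apply: (Lift_poly (Ginv_C c)) => t; rewrite /ev mevalC. Qed.

Lemma Lift_M phi psi : Lift phi -> Lift psi -> Lift (fun t => phi t * psi t).
Proof.
move=> [n1 [d1 [Hn1 Hd1 H1]]] [n2 [d2 [Hn2 Hd2 H2]]].
exists (n1 * n2), (d1 * d2); split; try exact: Ginv_M.
move=> t Ht; have [D1 E1] := H1 t Ht; have [D2 E2] := H2 t Ht.
by rewrite /ev !mevalM -!/(ev _ _) mulf_neq0 // E1 E2; split => //; ring.
Qed.

Lemma Lift_D phi psi : Lift phi -> Lift psi -> Lift (fun t => phi t + psi t).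
Proof.
move=> [n1 [d1 [Hn1 Hd1 H1]]] [n2 [d2 [Hn2 Hd2 H2]]].
exists (n1 * d2 + n2 * d1), (d1 * d2); split; try exact: Ginv_M.
  by apply: Ginv_D; apply: Ginv_M.
move=> t Ht; have [D1 E1] := H1 t Ht; have [D2 E2] := H2 t Ht.
by rewrite /ev !mevalD !mevalM -!/(ev _ _) mulf_neq0 // E1 E2; split => //; ring.
Qed.

Lemma Lift_V phi : Lift phi -> (forall t, gen t -> phi t != 0) -> Lift (fun t => (phi t)^-1).
Proof.
move=> [n [d [Hn Hd H]]] Hphi; exists d, n; split => // t Ht.
have [D E] := H t Ht; rewrite E mulf_neq0 ?Hphi //; split => //.
by field; rewrite Hphi.
Qed.

Lemma Lift_exp phi k : Lift phi -> Lift (fun t => phi t ^+ k).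
Proof.
move=> H; elim: k => [|k IH]; first by apply: Lift_E (Lift_C 1) _ => t _; rewrite expr0.
by apply: Lift_E (Lift_M H IH) _ => t _; rewrite exprS.
Qed.

Lemma Lift_sum (I : Type) (r : seq I) (F : I -> ('I_5 -> K) -> K) :
  (forall i, Lift (F i)) -> Lift (fun t => \sum_(i <- r) F i t).
Proof.
move=> H; elim: r => [|i r IH]; first by apply: Lift_E (Lift_C 0) _ => t _; rewrite big_nil.
by apply: Lift_E (Lift_D (H i) IH) _ => t _; rewrite big_cons.
Qed.

Lemma L_X : Lift (fun t => t 0 ^+ 2).
Proof. by have [P [HP E]] := @inv_u1 K; apply: Lift_poly HP E. Qed.
Lemma L_Y : Lift (fun t => t 1 ^+ 2).
Proof. by have [P [HP E]] := @inv_u2 K; apply: Lift_poly HP E. Qed.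
Lemma L_P3 : Lift (fun t => t 0 * t 1 * t 4).
Proof. by have [P [HP E]] := @inv_u3 K; apply: Lift_poly HP E. Qed.
Lemma L_D3 : Lift (fun t => t 2 * t 3 * t 4).
Proof. by have [P [HP E]] := @inv_u4 K; apply: Lift_poly HP E. Qed.
Lemma L_X5 : Lift (fun t => t 0 ^+ 2 * t 4 ^+ 2).
Proof. by have [P [HP E]] := @inv_u5 K; apply: Lift_poly HP E. Qed.
Lemma L_S6 : Lift (fun t => t 2 ^+ 2 + t 3 ^+ 2 + t 4 ^+ 2).
Proof. by have [P [HP E]] := @inv_u6 K; apply: Lift_poly HP E. Qed.

Lemma L_Z : Lift (fun t => t 4 ^+ 2).
Proof.
apply: Lift_E (Lift_M L_X5 (Lift_V L_X _)) _.
  by move=> t [H0 H4]; rewrite expf_neq0.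
by move=> t [H0 H4]; field.
Qed.

Lemma L_iZ : Lift (fun t => (t 4 ^+ 2)^-1).
Proof. by apply: Lift_V L_Z _ => t [H0 H4]; rewrite expf_neq0. Qed.

Lemma L_E1 : Lift (fun t => t 2 ^+ 2 + t 3 ^+ 2).
Proof.
apply: Lift_E (Lift_D L_S6 (Lift_M (Lift_C (-1)) L_Z)) _.
by move=> t _; ring.
Qed.

Lemma L_E2 : Lift (fun t => t 2 ^+ 2 * t 3 ^+ 2).
Proof.
apply: Lift_E (Lift_M (Lift_exp 2 L_D3) L_iZ) _.
by move=> t [H0 H4]; field.
Qed.

Lemma L_W10 : Lift (fun t => t 0 * t 1 * t 2 * t 3).
Proof.
apply: Lift_E (Lift_M (Lift_M L_P3 L_D3) L_iZ) _.
by move=> t [H0 H4]; field.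
Qed.

Lemma L_Pw n : Lift (fun t => (t 2 ^+ 2) ^+ n + (t 3 ^+ 2) ^+ n).
Proof.
have H : forall n, Lift (fun t => (t 2 ^+ 2) ^+ n + (t 3 ^+ 2) ^+ n) /\
                    Lift (fun t => (t 2 ^+ 2) ^+ n.+1 + (t 3 ^+ 2) ^+ n.+1).
  elim => [|k [IH1 IH2]].
    split; first by apply: Lift_E (Lift_C 2) _ => t _; rewrite !expr0.
    by apply: Lift_E L_E1 _ => t _; rewrite !expr1.
  split => //.
  apply: Lift_E (Lift_D (Lift_M L_E1 IH2) (Lift_M (Lift_C (-1)) (Lift_M L_E2 IH1))) _.
  by move=> t _; rewrite !exprS; ring.
by case: (H n).
Qed.

Lemma L_Sym i j : Lift (fun t => (t 2 ^+ 2) ^+ i * (t 3 ^+ 2) ^+ j + (t 2 ^+ 2) ^+ j * (t 3 ^+ 2) ^+ i).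
Proof.
wlog le_ij : i j / (i <= j)%N.
  move=> W; case: (leqP i j) => [/W //|/ltnW /W H].
  by apply: Lift_E H _ => t _; rewrite addrC.
have -> : j = (i + (j - i))%N by rewrite subnKC.
move: (j - i)%N => d.
apply: Lift_E (Lift_M (Lift_exp i L_E2) (L_Pw d)) _.
by move=> t _; rewrite !exprD !exprMn; ring.
Qed.

Definition mono (a b c e f : nat) t := t 0 ^+ a * t 1 ^+ b * t 2 ^+ c * t 3 ^+ e * t 4 ^+ f.

Lemma expr_half (x : K) n : x ^+ n = x ^+ (odd n) * (x ^+ 2) ^+ (n./2).
Proof. by rewrite -{1}(odd_double_half n) exprD -mul2n exprM. Qed.

Lemma L_mono2 a b c e f : ~~ odd (a + b) -> ~~ odd (b + c + f) -> ~~ odd (b + e + f) ->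
  Lift (fun t => mono a b c e f t + mono a b e c f t).
Proof.
rewrite !oddD => Hab Hcf Hef.
have Ha : odd a = odd b by move: Hab; case: (odd a); case: (odd b).
have Hc : odd c = odd b (+) odd f by move: Hcf; case: (odd b); case: (odd c); case: (odd f).
have He : odd e = odd c by rewrite Hc; move: Hef; case: (odd b); case: (odd e); case: (odd f).
have LW : Lift (fun t => t 0 ^+ odd b * t 1 ^+ odd b * t 2 ^+ odd c * t 3 ^+ odd c * t 4 ^+ odd f).
  rewrite Hc; case: (odd b); case: (odd f) => /=.
  - by apply: Lift_E L_P3 _ => t _; rewrite !expr1 !expr0; ring.
  - by apply: Lift_E L_W10 _ => t _; rewrite !expr1 !expr0; ring.
  - by apply: Lift_E L_D3 _ => t _; rewrite !expr1 !expr0; ring.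
  - by apply: Lift_E (Lift_C 1) _ => t _; rewrite !expr0; ring.
apply: Lift_E (Lift_M (Lift_M (Lift_M (Lift_M LW (Lift_exp (a./2) L_X)) (Lift_exp (b./2) L_Y))
   (Lift_exp (f./2) L_Z)) (L_Sym (c./2) (e./2))) _.
move=> t _; rewrite /mono.
rewrite [t 0 ^+ a]expr_half [t 1 ^+ b]expr_half [t 2 ^+ c]expr_half [t 3 ^+ c]expr_half.
rewrite [t 2 ^+ e]expr_half [t 3 ^+ e]expr_half [t 4 ^+ f]expr_half Ha He.
ring.
Qed.

End Lifts.


Section Grp16.
Variable K : numClosedFieldType.
Implicit Types (t : 'I_5 -> K).

Definition G16 := (bool * bool * bool * bool)%type.
Definition sg (b : bool) : K := (-1) ^+ b.

Definition act5 (n : G16) t : 'I_5 -> K :=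
  let: (d, e1, e2, sw) := n in
  fun i => nth 0 [:: sg d * t 0; sg d * sg e1 * sg e2 * t 1;
                   sg e1 * t (if sw then 3 else 2); sg e2 * t (if sw then 2 else 3);
                   sg e1 * sg e2 * t 4] i.

Definition mul16 (n m : G16) : G16 :=
  let: (dn, e1n, e2n, swn) := n in let: (dm, e1m, e2m, swm) := m in
  (dn (+) dm, e1n (+) (if swn then e2m else e1m), e2n (+) (if swn then e1m else e2m), swn (+) swm).

Definition one16 : G16 := (false, false, false, false).

Lemma ord5_cases (i : 'I_5) : i = 0 \/ i = 1 \/ i = 2 \/ i = 3 \/ i = 4.
Proof.
case: i => [[|[|[|[|[|i]]]]] Hi].
- by left; apply: val_inj.
- by right; left; apply: val_inj.
- by right; right; left; apply: val_inj.
- by right; right; right; left; apply: val_inj.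
- by right; right; right; right; apply: val_inj.
- by [].
Qed.

Lemma sg_addb a b : sg (a (+) b) = sg a * sg b.
Proof. exact: signr_addb. Qed.

Lemma act5_mul n m t i : act5 n (act5 m t) i = act5 (mul16 n m) t i.
Proof.
case: n => [[[dn e1n] e2n] swn]; case: m => [[[dm e1m] e2m] swm].
rewrite /act5 /mul16 !sg_addb.
case: (ord5_cases i) => [->|[->|[->|[->|->]]]] /=; case: swn; case: swm => /=; ring.
Qed.

Definition inv16 (m : G16) : G16 :=
  let: (d, e1, e2, sw) := m in (d, if sw then e2 else e1, if sw then e1 else e2, sw).

Lemma mul16_inv n m : mul16 (mul16 n m) (inv16 m) = n.
Proof.
case: n => [[[dn e1n] e2n] swn]; case: m => [[[dm e1m] e2m] swm].
by case: dn; case: e1n; case: e2n; case: swn; case: dm; case: e1m; case: e2m; case: swm.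
Qed.

Lemma mul16_inj m : injective (fun n => mul16 n m).
Proof. exact: (can_inj (g := fun n => mul16 n (inv16 m)) (fun n => mul16_inv n m)). Qed.

Lemma mul16_eq n m : (mul16 n m == m) = (n == one16).
Proof.
case: n => [[[dn e1n] e2n] swn]; case: m => [[[dm e1m] e2m] swm].
by case: dn; case: e1n; case: e2n; case: swn; case: dm; case: e1m; case: e2m; case: swm.
Qed.


Lemma inv16_l n : exists k, mul16 k n = one16.
Proof.
case: n => [[[dm e1m] e2m] swm].
exists (dm, if swm then e2m else e1m, if swm then e1m else e2m, swm).
by case: dm; case: e1m; case: e2m; case: swm.
Qed.

Lemma act5_one t i : act5 one16 t i = t i.
Proof.
rewrite /act5 /one16 /sg /= !expr0.
by case: (ord5_cases i) => [->|[->|[->|[->|->]]]] /=; ring.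
Qed.

Lemma sg_pm b : sg b = 1 \/ sg b = -1.
Proof. by case: b; [right; rewrite /sg expr1 | left; rewrite /sg expr0]. Qed.
Lemma pm_M (x y : K) : x = 1 \/ x = -1 -> y = 1 \/ y = -1 -> x * y = 1 \/ x * y = -1.
Proof. by case=> ->; case=> ->; rewrite ?mulr1 ?mul1r ?mulrNN ?mulr1; auto. Qed.
Lemma pm_N (x : K) : x = 1 \/ x = -1 -> - x = 1 \/ - x = -1.
Proof. by case=> ->; rewrite ?opprK; auto. Qed.

Lemma emb_ext t t' : (forall i, t i = t' i) -> emb t = emb t'.
Proof. by move=> H; rewrite /emb !H. Qed.

Lemma perm1_2 (i : 'I_2) : (1%g : 'S_2) i = i.
Proof. by rewrite perm1. Qed.

Lemma act5_N n : exists g1 g2 : 'M[K]_3, inN g1 g2 /\ forall t, act g1 g2 (emb t) = emb (act5 n t).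
Proof.
case: n => [[[d e1] e2] sw].
case: sw.
- pose A1 := mx2 0 1 (- sg d) 0; pose A2 := mx2 0 (sg e1) (- (sg d * sg e2)) 0.
  have HA1 : signed_perm (tperm 0 1) A1.
    move=> i j; case: (ord2_cases i) => ->; case: (ord2_cases j) => ->;
      rewrite ?tpermL ?tpermR /A1 !mxE /=; auto.
    by apply: pm_N; apply: sg_pm.
  have HA2 : signed_perm (tperm 0 1) A2.
    move=> i j; case: (ord2_cases i) => ->; case: (ord2_cases j) => ->;
      rewrite ?tpermL ?tpermR /A2 !mxE /=; auto.
    - exact: sg_pm.
    - by apply: pm_N; apply: pm_M; apply: sg_pm.
  exists (embed2 A1), (embed2 A2); split; first by exists (tperm 0 1), A1, A2.
  move=> t.
  rewrite actE (SO3_inv (embed2_SO3 (signed_perm_orth HA1))) /emb /= !embed2_mx3 /A1 /A2 !det_mx2 !mxE /=.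
  rewrite trmx3 !mulmx3c !mulmx3.
  clear HA1 HA2 A1 A2.
  by case: d; rewrite /sg /= ?expr0 ?expr1; congr (_, _, _); (congr col3 || congr mx3); ring.
- pose A1 := mx2 1 0 0 (sg d); pose A2 := mx2 (sg e1) 0 0 (sg e2 * sg d).
  have HA1 : signed_perm 1%g A1.
    move=> i j; case: (ord2_cases i) => ->; case: (ord2_cases j) => ->;
      rewrite perm1_2 /A1 !mxE /=; auto.
    exact: sg_pm.
  have HA2 : signed_perm 1%g A2.
    move=> i j; case: (ord2_cases i) => ->; case: (ord2_cases j) => ->;
      rewrite perm1_2 /A2 !mxE /=; auto.
    - exact: sg_pm.
    - by apply: pm_M; apply: sg_pm.
  exists (embed2 A1), (embed2 A2); split; first by exists 1%g, A1, A2.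
  move=> t.
  rewrite actE (SO3_inv (embed2_SO3 (signed_perm_orth HA1))) /emb /= !embed2_mx3 /A1 /A2 !det_mx2 !mxE /=.
  rewrite trmx3 !mulmx3c !mulmx3.
  clear HA1 HA2 A1 A2.
  by case: d; rewrite /sg /= ?expr0 ?expr1; congr (_, _, _); (congr col3 || congr mx3); ring.
Qed.

End Grp16.


Section Avg.
Variable K : numClosedFieldType.
Implicit Types (t : 'I_5 -> K).

Lemma prod5 (F : 'I_5 -> K) : \prod_(i < 5) F i = F 0 * F 1 * F 2 * F 3 * F 4.
Proof.
rewrite !big_ord_recr big_ord0 /= mul1r.
by congr (_ * _ * _ * _ * _); congr F; apply: val_inj.
Qed.

Lemma sum_pair (T1 T2 : finType) (F : T1 * T2 -> K) :
  \sum_(n : T1 * T2) F n = \sum_(i : T1) \sum_(j : T2) F (i, j).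
Proof. by rewrite pair_bigA; apply: eq_bigr => [[i j]]. Qed.

Lemma sum16 (F : G16 -> K) : \sum_(n : G16) F n =
  \sum_(d : bool) \sum_(e1 : bool) \sum_(e2 : bool) \sum_(sw : bool) F (d, e1, e2, sw).
Proof.
rewrite sum_pair sum_pair sum_pair.
by apply: eq_bigr => d _; apply: eq_bigr => e1 _; apply: eq_bigr => e2 _.
Qed.

Lemma act5_mono (m : 'X_{1..5}) d e1 e2 sw t :
  \prod_(i < 5) (act5 (d, e1, e2, sw) t i) ^+ m i =
  (sg K d ^+ m 0 * sg K d ^+ m 1) * (sg K e1 ^+ m 1 * sg K e1 ^+ m 2 * sg K e1 ^+ m 4) *
  (sg K e2 ^+ m 1 * sg K e2 ^+ m 3 * sg K e2 ^+ m 4) *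
  (if sw then mono (m 0) (m 1) (m 3) (m 2) (m 4) t else mono (m 0) (m 1) (m 2) (m 3) (m 4) t).
Proof.
rewrite prod5 /act5 /mono /=.
case: sw => /=; rewrite !exprMn; ring.
Qed.

Definition S2 (k : nat) : K := (-1) ^+ k + 1.

Lemma S2_val k : S2 k = if odd k then 0 else 2.
Proof. by rewrite /S2 -signr_odd; case: (odd k); rewrite ?expr1 ?expr0 ?addNr. Qed.

Lemma sum_mono (m : 'X_{1..5}) t :
  \sum_(n : G16) \prod_(i < 5) (act5 n t i) ^+ m i =
  S2 (m 0 + m 1) * S2 (m 1 + m 2 + m 4) * S2 (m 1 + m 3 + m 4) *
  (mono (m 0) (m 1) (m 2) (m 3) (m 4) t + mono (m 0) (m 1) (m 3) (m 2) (m 4) t).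
Proof.
rewrite sum16.
under eq_bigr => d _ do under eq_bigr => e1 _ do under eq_bigr => e2 _ do
  under eq_bigr => sw _ do rewrite act5_mono.
rewrite !big_bool /= /sg /= expr1 expr0 !expr1n /S2 !exprD.
ring.
Qed.

Lemma Lift_avgmono (m : 'X_{1..5}) :
  Lift (fun t => (16%:R)^-1 * \sum_(n : G16) \prod_(i < 5) (act5 n t i) ^+ m i).
Proof.
case E1 : (odd (m 0 + m 1)).
  by apply: Lift_E (Lift_C 0) _ => t _; rewrite sum_mono (S2_val (m 0 + m 1)) E1 !(mul0r, mulr0).
case E2 : (odd (m 1 + m 2 + m 4)).
  by apply: Lift_E (Lift_C 0) _ => t _; rewrite sum_mono (S2_val (m 1 + m 2 + m 4)) E2 !(mul0r, mulr0).
case E3 : (odd (m 1 + m 3 + m 4)).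
  by apply: Lift_E (Lift_C 0) _ => t _; rewrite sum_mono (S2_val (m 1 + m 3 + m 4)) E3 !(mul0r, mulr0).
have LL := Lift_M (Lift_C ((16%:R : K)^-1 * 8%:R)) (@L_mono2 K _ _ _ _ _ (negbT E1) (negbT E2) (negbT E3)).
apply: Lift_E LL _.
move=> t _; rewrite sum_mono !S2_val E1 E2 E3 /=.
rewrite (_ : (16%:R : K) = 2 * 2 * 2 * 2); last by rewrite -!natrM.
rewrite (_ : (8%:R : K) = 2 * 2 * 2); last by rewrite -!natrM.
field.
by [].
Qed.

Lemma Lift_avg (phi : ('I_5 -> K) -> K) : PF phi ->
  Lift (fun t => (16%:R)^-1 * \sum_(n : G16) phi (act5 n t)).
Proof.
move=> [P HP].
have LL : Lift (fun t => \sum_(m <- msupp P) P@_m * ((16%:R)^-1 *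
   \sum_(n : G16) \prod_(i < 5) (act5 n t i) ^+ m i)).
  apply: (@Lift_sum K _ _ (fun (m : 'X_{1..5}) t => P@_m * ((16%:R)^-1 *
   \sum_(n : G16) \prod_(i < 5) (act5 n t i) ^+ m i))) => m.
  by apply: Lift_M (Lift_C _) (Lift_avgmono m).
apply: Lift_E LL _.
move=> t _.
under [\sum_(n : G16) _]eq_bigr => n _ do rewrite -HP mevalE.
rewrite exchange_big mulr_sumr; apply: eq_bigr => m _.
by rewrite -mulr_sumr mulrCA.
Qed.

End Avg.


Section Part4.
Variable K : numClosedFieldType.
Implicit Types (t : 'I_5 -> K).
Local Notation X := (@X2 K).
Local Notation S := (@Ssub K).

Lemma inv16_r n : exists k, mul16 n k = one16.
Proof.
case: n => [[[dm e1m] e2m] swm].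
exists (dm, if swm then e2m else e1m, if swm then e1m else e2m, swm).
by case: dm; case: e1m; case: e2m; case: swm.
Qed.

Lemma PF_prod (r : seq G16) (P : pred G16) (F : G16 -> ('I_5 -> K) -> K) :
  (forall i, P i -> PF (F i)) -> PF (fun t => \prod_(i <- r | P i) F i t).
Proof. exact: (@cl_prod K ('I_5 -> K) (@PF K 5) (@PF_E K 5) (@PF_C K 5) (@PF_M K 5)). Qed.

Lemma PF_gen : PF (fun t : 'I_5 -> K => t 0 * t 4).
Proof. by apply: PF_M; apply: PF_X. Qed.

Lemma PF_zero_gen (f : ('I_5 -> K) -> K) : PF f -> (forall t, gen t -> f t = 0) -> forall t, f t = 0.
Proof.
move=> Hf H t; apply/eqP; apply: contraT => Ht.
have H1 : (fun _ : 'I_5 => (1 : K)) 0 * (fun _ : 'I_5 => (1 : K)) 4 != 0 by rewrite mulr1 oner_eq0.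
have [t' Ht'] := @PF_nz K 5 _ _ t (fun _ => 1) Hf PF_gen Ht H1.
have G' : gen t' by split; apply: contraNneq Ht' => ->; rewrite ?mul0r ?mulr0.
by rewrite H // mul0r eqxx in Ht'.
Qed.

Lemma sum16_const (c : K) : \sum_(n : G16) c = 16%:R * c.
Proof.
rewrite sum16 !big_bool /=.
rewrite (_ : (16%:R : K) = 2 * 2 * 2 * 2); last by rewrite -!natrM.
ring.
Qed.

Lemma sixteen_nz : (16%:R : K) != 0.
Proof. by rewrite pnatr_eq0. Qed.

Lemma part4 (a b : polyL K) : ratfun_on S a b -> invariant_on S (@inN K) a b ->
  exists p q : polyL K,
    [/\ ratfun_on X p q, invariant_on X (@inG K) p q, ratfun_on S p q & same_on S p q a b].
Proof.
move=> Hb Hi.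
pose A t := ev a (emb t); pose B t := ev b (emb t).
have PB : forall n, PF (fun t => B (act5 n t)).
  move=> n; have [g1 [g2 [_ E]]] := act5_N K n.
  by apply: PF_E (PF_ev_act_emb b g1 g2) _ => t; rewrite /B -E.
have PA : PF A := PF_ev_emb a.
pose Q t := \prod_(n : G16) B (act5 n t).
pose Pt t := A t * \prod_(n : G16 | n != one16) B (act5 n t).
have PQ : PF Q by apply: PF_prod => n _; apply: PB.
have PPt : PF Pt by apply: PF_M PA _; apply: PF_prod => n _; apply: PB.
have Bc : forall n m t, B (act5 n (act5 m t)) = B (act5 (mul16 n m) t).
  by move=> n m t; rewrite /B (emb_ext (act5_mul n m t)).
have Qinv : forall m t, Q (act5 m t) = Q t.
  move=> m t; rewrite /Q [RHS](reindex_inj (@mul16_inj m)) /=.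
  by apply: eq_bigr => n _; rewrite Bc.
have rel : forall m t, A (act5 m t) * B t = A t * B (act5 m t).
  move=> m t; have [g1 [g2 [HN E]]] := act5_N K m.
  have Sz : S (emb t) by apply/Ssub_emb; exists t.
  have := Hi g1 g2 HN (emb t) Sz; rewrite E => /eqP; rewrite subr_eq0 => /eqP.
  by rewrite /A /B.
have Prel : forall m t, Pt (act5 m t) * B t = A t * Q t.
  move=> m t; rewrite /Pt.
  have -> : \prod_(n | n != one16) B (act5 n (act5 m t)) = \prod_(k | k != m) B (act5 k t).
    rewrite [RHS](reindex_inj (@mul16_inj m)) /=.
    apply: eq_big => [n|n _]; first by rewrite mul16_eq.
    by rewrite Bc.
  by rewrite mulrAC rel -mulrA /Q [in RHS](bigD1 m) //=.
have avgP : forall t, ((16%:R)^-1 * \sum_(m : G16) Pt (act5 m t)) * B t = A t * Q t.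
  move=> t; rewrite -mulrA mulr_suml (eq_bigr _ (fun m _ => Prel m t)) sum16_const.
  by rewrite mulrA mulVf ?mul1r // sixteen_nz.
have avgQ : forall t, (16%:R)^-1 * \sum_(m : G16) Q (act5 m t) = Q t.
  move=> t; rewrite (eq_bigr _ (fun m _ => Qinv m t)) sum16_const.
  by rewrite mulrA mulVf ?mul1r // sixteen_nz.
have [nP [dP [GnP GdP HP]]] := Lift_avg PPt.
have [nQ [dQ [GnQ GdQ HQ]]] := Lift_avg PQ.
have prod_nz : forall r : seq G16, exists t, \prod_(n <- r) B (act5 n t) != 0.
  have [t1 Ht1] := ratfun_S_ex Hb.
  elim => [|n r [t IH]]; first by exists t1; rewrite big_nil oner_eq0.
  have [k Hk] := inv16_r n.
  have Hn : B (act5 n (act5 k t1)) != 0.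
    by rewrite Bc Hk /B (emb_ext (act5_one t1)).
  have PR : PF (fun t => \prod_(i <- r) B (act5 i t)) by apply: PF_prod => i _; apply: PB.
  have [t' Ht'] := PF_nz (PB n) PR Hn IH.
  by exists t'; rewrite big_cons.
have Qnz : exists t, gen t /\ Q t != 0.
  have [t3 Ht3] := prod_nz (index_enum G16).
  have H1 : (fun _ : 'I_5 => (1 : K)) 0 * (fun _ : 'I_5 => (1 : K)) 4 != 0 by rewrite mulr1 oner_eq0.
  have [t Ht] := @PF_nz K 5 _ _ (fun _ => 1) t3 PF_gen PQ H1 Ht3.
  exists t; split; last by apply/eqP => E; rewrite E mulr0 eqxx in Ht.
  by split; apply/eqP => E; move: Ht; rewrite /= E !(mul0r, mulr0) => /eqP.
have [t0 [G0 Q0]] := Qnz.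
have S0 : S (emb t0) by apply/Ssub_emb; exists t0.
have q0 : ev (dP * nQ) (emb t0) != 0.
  have [DP _] := HP t0 G0; have [DQ EQ] := HQ t0 G0.
  by rewrite /ev mevalM -!/(ev _ _) EQ avgQ !mulf_neq0.
exists (nP * dQ), (dP * nQ); split.
- by move=> H; move: q0; rewrite H ?eqxx //; apply: S_X2.
- move=> g1 g2 HG z _.
  by rewrite /ev !mevalM -!/(ev _ _) GnP ?GdQ ?GdP ?GnQ // subrr.
- by move=> H; move: q0; rewrite H ?eqxx.
- move=> z /Ssub_emb [t ->].
  pose Phi t := ev (nP * dQ) (emb t) * ev b (emb t) - ev a (emb t) * ev (dP * nQ) (emb t).
  have PPhi : PF Phi.
    apply: PF_D; first by apply: PF_M; apply: PF_ev_emb.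
    apply: (PF_E (f := fun t => (-1) * (ev a (emb t) * ev (dP * nQ) (emb t)))); last by move=> x; rewrite mulN1r.
    by apply: PF_M; [apply: PF_C | apply: PF_M; apply: PF_ev_emb].
  apply: (PF_zero_gen PPhi) => {}t Gt.
  have [DP EP] := HP t Gt; have [DQ EQ] := HQ t Gt.
  rewrite /Phi /ev !mevalM -!/(ev _ _) EP EQ avgQ.
  transitivity (ev dP (emb t) * ev dQ (emb t) *
    (((16%:R)^-1 * \sum_(n : G16) Pt (act5 n t)) * B t - A t * Q t)).
    by rewrite /A /B; ring.
  by rewrite avgP subrr mulr0.
Qed.

End Part4.

Unset Implicit Arguments.

Theorem corollaryB3 (R : realType) :
  let K := R[i] in
  let X := @X2 K in
  let S := @Ssub K in
  (forall p q : polyL K,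
     ratfun_on X p q -> invariant_on X (@inG K) p q ->
     exists p' q' : polyL K,
       [/\ ratfun_on X p' q', same_on X p q p' q' & ratfun_on S p' q']) /\
  (forall p q : polyL K,
     ratfun_on X p q -> invariant_on X (@inG K) p q -> ratfun_on S p q ->
     invariant_on S (@inN K) p q) /\
  (forall p1 q1 p2 q2 : polyL K,
     ratfun_on X p1 q1 -> invariant_on X (@inG K) p1 q1 -> ratfun_on S p1 q1 ->
     ratfun_on X p2 q2 -> invariant_on X (@inG K) p2 q2 -> ratfun_on S p2 q2 ->
     same_on S p1 q1 p2 q2 -> same_on X p1 q1 p2 q2) /\
  (forall a b : polyL K,
     ratfun_on S a b -> invariant_on S (@inN K) a b ->
     exists p q : polyL K,
       [/\ ratfun_on X p q, invariant_on X (@inG K) p q,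
           ratfun_on S p q & same_on S p q a b]).
Proof.
move=> K X S.
split; first exact: (@part1 K).
split; first exact: (@part2 K).
split; first exact: (@part3 K).
exact: (@part4 K).
Qed.
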